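(* Let $p\colon X\to B$ be a Boolean set and let $G$ be an ultrafilter of $(X,\le)$. If $x,y\in X$ satisfy $x\sim y$ and $x\vee y\in G$, then $x\in G$ or $y\in G$.
   Context: Convention: a ''Boolean algebra'' means a generalized Boolean algebra (relatively complemented distributive lattice with $0$). Presheaf of sets over a meet semilattice $E$: pairwise disjoint sets $X_e$, restriction maps $x\mapsto x|^e_f$ for $e\ge f$ with $|^e_e=\mathrm{id}$ and $(x|^e_f)|^f_g=x|^e_g$; $p(x)=e$ iff $x\in X_e$; global support: all $X_e\neq\emptyset$. Order: $x\le y$ iff $p(x)\le p(y)$ and $x=y|^{p(y)}_{p(x)}$. Compatibility $x\sim y$: $x\wedge y$ exists and $p(x\wedge y)=p(x)\wedge p(y)$. A Boolean set is a presheaf $p\colon X\to B$ with global support over a Boolean algebra $B$ such that $(X,\le)$ has least element $0$, compatible pairs have joins, and $p(x)=0\Rightarrow x=0$. In a poset, a filter is a non-empty, down directed, upwardly closed subset; an ultrafilter is a maximal filter among those not equal to the whole poset. *)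

(* Defs.v *)
From HB Require Import structures.
From mathcomp Require Import all_boot all_order.
Set Implicit Arguments. Unset Strict Implicit. Unset Printing Implicit Defensive.
Import Order.Theory.
Local Open Scope order_scope.

(* A generalized Boolean algebra (relatively complemented distributive lattice
   with 0) is a [cbDistrLatticeType d] in MathComp.

   A presheaf of sets over B is represented by a carrier type X (the disjoint
   union of the X_e), the support map p : X -> B (p x = e iff x \in X_e) and a
   total restriction function res : X -> B -> X, where [res x f] is meant to be
   x|^{p x}_f and is only constrained when f <= p x. *)
Section BooleanSets.
Context {d : Order.disp_t} {B : cbDistrLatticeType d} {X : Type}.
Variables (p : X -> B) (res : X -> B -> X).

Definition is_presheaf : Prop :=
  [/\ (forall x f, f <= p x -> p (res x f) = f),
      (forall x, res x (p x) = x) &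
      (forall x f g, g <= f -> f <= p x -> res (res x f) g = res x g)].

Definition global_support : Prop := forall e : B, exists x, p x = e.

Definition leX (x y : X) : Prop := p x <= p y /\ x = res y (p x).

Definition is_meet (x y m : X) : Prop :=
  [/\ leX m x, leX m y & forall z, leX z x -> leX z y -> leX z m].

Definition is_join (x y j : X) : Prop :=
  [/\ leX x j, leX y j & forall z, leX x z -> leX y z -> leX j z].

Definition is_least (z : X) : Prop := forall x, leX z x.

Definition compatible (x y : X) : Prop :=
  exists m, is_meet x y m /\ p m = p x `&` p y.

Definition boolean_set : Prop :=
  [/\ is_presheaf, global_support,
      (exists z, is_least z),
      (forall x y, compatible x y -> exists j, is_join x y j) &
      (forall x, p x = \bot -> is_least x)].

Definition is_filter (G : X -> Prop) : Prop :=
  [/\ (exists x, G x),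
      (forall a b, G a -> G b -> exists c, [/\ G c, leX c a & leX c b]) &
      (forall a b, G a -> leX a b -> G b)].

Definition proper (G : X -> Prop) : Prop := exists x, ~ G x.

Definition is_ultrafilter (G : X -> Prop) : Prop :=
  [/\ is_filter G, proper G &
      forall H : X -> Prop, is_filter H -> proper H ->
        (forall x, G x -> H x) -> forall x, H x -> G x].

End BooleanSets.

(* Main.v *)
Require Import Defs.
From HB Require Import structures.
From mathcomp Require Import all_boot all_order.
From Stdlib Require Import Classical.

Section Aux.
Import Order.Theory.
Local Open Scope order_scope.
Context {d : Order.disp_t} {B : cbDistrLatticeType d} {X : Type}.
Variables (p : X -> B) (res : X -> B -> X).
Hypothesis PS : is_presheaf p res.

Lemma leX_refl u : leX p res u u.
Proof. case: PS => _ H2 _; split => //; by rewrite H2. Qed.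

Lemma leX_trans u v w : leX p res u v -> leX p res v w -> leX p res u w.
Proof.
case: PS => H1 H2 H3 [l1 e1] [l2 e2]; split; first exact: le_trans l2.
by rewrite {1}e1 {1}e2 H3.
Qed.

Lemma leX_res w f f' : f <= f' -> f' <= p w -> leX p res (res w f) (res w f').
Proof.
case: PS => H1 H2 H3 l1 l2; have l3 := le_trans l1 l2.
split; first by rewrite (H1 _ _ l3) (H1 _ _ l2).
by rewrite (H1 _ _ l3) H3.
Qed.

Lemma leX_res1 w f : f <= p w -> leX p res (res w f) w.
Proof. case: PS => H1 H2 H3 l; split; by rewrite (H1 _ _ l). Qed.

Lemma key (G : X -> Prop) j x (z : X) : is_least p res z ->
  is_ultrafilter p res G -> G j -> leX p res x j ->
  G x \/ exists c, [/\ G c, leX p res c j & p c `&` p x = \bot].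
Proof.
move=> Lz [[_ Gdir Gup] _ Gmax] Gj [lxj exj].
case: (classic (exists c, [/\ G c, leX p res c j & p c `&` p x = \bot])) => Hc;
  [by right|left].
case: PS => H1 H2 H3.
set H := fun w => exists c, [/\ G c, leX p res c j & leX p res (res j (p c `&` p x)) w].
have lcj c : leX p res c j -> p c `&` p x <= p j.
  by move=> [l _]; apply: le_trans l; apply: leIl.
have GH g : G g -> H g.
  move=> Gg; case: (Gdir _ _ Gg Gj) => c [Gc cg cj]; exists c; split => //.
  apply: leX_trans cg; case: (cj) => l e; rewrite {2}e.
  apply: leX_res => //; exact: leIl.
apply: (Gmax H) => //.
- split; first by exists j; apply: GH.
  + move=> w1 w2 [c1 [Gc1 c1j l1]] [c2 [Gc2 c2j l2]].
    case: (Gdir _ _ Gc1 Gc2) => c [Gc cc1 cc2].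
    have cj : leX p res c j by apply: leX_trans cc1 c1j.
    exists (res j (p c `&` p x)); split.
    * by exists c; split => //; apply: leX_refl.
    * apply: leX_trans l1; apply: leX_res; last exact: lcj.
      by apply: leI2 => //; case: cc1.
    * apply: leX_trans l2; apply: leX_res; last exact: lcj.
      by apply: leI2 => //; case: cc2.
  + move=> a b [c [Gc cj l]] ab; exists c; split => //; exact: leX_trans ab.
- exists z => -[c [Gc cj [l _]]]; apply: Hc; exists c; split => //.
  apply/eqP; rewrite eq_le le0x andbT; apply: (le_trans (y := p z)).
    by rewrite H1 // in l; apply: lcj.
  case: (Lz (res j \bot)) => l' _; by rewrite H1 ?le0x in l'.
- exists j; split => //.
  have -> : p j `&` p x = p x by apply/meet_idPr.
  rewrite -exj; exact: leX_refl.
Qed.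
End Aux.

Import Order.Theory.
Local Open Scope order_scope.
Theorem lemma3p7 (d : Order.disp_t) (B : cbDistrLatticeType d) (X : Type)
  (p : X -> B) (res : X -> B -> X) (G : X -> Prop) :
  boolean_set p res -> is_ultrafilter p res G ->
  forall x y j : X, compatible p res x y -> is_join p res x y j -> G j ->
  G x \/ G y.
Proof.
move=> [PS _ [z Lz] _ L0] UF x y j _ [xj yj jub] Gj.
have UF' := UF; case: UF' => [[_ Gdir Gup] [w nGw] _].
case: (@key _ _ _ p res PS _ _ _ _ Lz UF Gj xj) => [Gx|[c1 [Gc1 c1j e1]]]; first by left.
case: (@key _ _ _ p res PS _ _ _ _ Lz UF Gj yj) => [Gy|[c2 [Gc2 c2j e2]]]; first by right.
exfalso; case: PS => H1 H2 H3.
have ej : (p j <= p x `|` p y)%O.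
  have l : (p x `|` p y <= p j)%O by rewrite leUx; case: xj => -> _; case: yj => -> _.
  have [l' _] : leX p res j (res j (p x `|` p y)).
    apply: jub.
    - case: xj => lx ex; split; first by rewrite (H1 _ _ l) leUl.
      by rewrite H3 ?leUl.
    - case: yj => ly ey; split; first by rewrite (H1 _ _ l) leUr.
      by rewrite H3 ?leUr.
  by rewrite (H1 _ _ l) in l'.
case: (Gdir _ _ Gc1 Gc2) => c [Gc [l1 _] [l2 _]].
have pc0 : p c = Order.bottom.
  have lcj : (p c <= p j)%O by apply: le_trans l1 _; case: c1j.
  have lcu := le_trans lcj ej.
  have -> : p c = Order.meet (p c) (p x `|` p y) by apply/esym/meet_idPl.
  rewrite meetUr.
  have -> : Order.meet (p c) (p x) = Order.bottom.
    apply/le_anti; rewrite le0x andbT -e1.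
    by apply: leI2.
  have -> : Order.meet (p c) (p y) = Order.bottom.
    apply/le_anti; rewrite le0x andbT -e2.
    by apply: leI2.
  by rewrite joinx0.
by apply: nGw; apply: Gup Gc _; apply: L0.
Qed.
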